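(* Let $\phi$ be a formula whose free variables are among $\{x\}$. If $[x:=a](\phi\to\mathsf{K}_x[x:=a]\phi)$ is a theorem of $\mathbf{LEL}$ for every $a\in\mathbf{A}$, then for every sentence $\alpha$, $\mathsf{K}_\phi\alpha\to\mathsf{K}_\phi\mathsf{K}_\phi\alpha$ is a theorem of $\mathbf{LEL}$.
   Context: Fix a nonempty finite set $\mathbf{A}$ of agents, a countable set $\mathbf{X}$ of variables disjoint from $\mathbf{A}$, and a countable set $\mathbf{P}$ of predicate letters. Formulas and free variables: $\phi ::= p_x \mid \top \mid \neg\phi \mid (\phi\wedge\phi) \mid [x:=a]\phi \mid \mathsf{K}_X\alpha$ ($p\in\mathbf{P}$, $x\in\mathbf{X}$, $a\in\mathbf{A}$, $X\subseteq\mathbf{X}$ finite possibly empty, $\alpha$ with no free variables), $FV(p_x)=\{x\}$, $FV(\top)=\emptyset$, $FV(\neg\phi)=FV(\phi)$, $FV(\phi\wedge\psi)=FV(\phi)\cup FV(\psi)$, $FV([x:=a]\phi)=FV(\phi)\setminus\{x\}$, $FV(\mathsf{K}_X\alpha)=X$. Sentences have no free variables. $\bot:=\neg\top$, $\langle x:=a\rangle\phi:=\neg[x:=a]\neg\phi$. $\phi[y/x]$ replaces free occurrences of $x$ by $y$ (including in index sets of $\mathsf{K}_X$); admissible if $x$ has no free occurrence within the scope of any $[y:=b]$. $[\vec{x}:=\vec{a}]\phi$ abbreviates $[x_1:=a_1]\cdots[x_n:=a_n]\phi$ for equal-length strings $\vec x,\vec a$, $\mathsf{K}_{\vec x}:=\mathsf{K}_{\{x_1,\dots,x_n\}}$,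 $\mathsf{K}_x:=\mathsf{K}_{\{x\}}$, $\{\vec a\}=\{a_1,\dots,a_n\}$. $\mathbf{LEL}$: axioms — propositional tautologies; $\mathsf{K}_X(\alpha\to\beta)\to(\mathsf{K}_X\alpha\to\mathsf{K}_X\beta)$; $\mathsf{K}_X\alpha\to\mathsf{K}_Y\alpha$ ($X\subseteq Y$); $[x:=a](\phi\to\psi)\to([x:=a]\phi\to[x:=a]\psi)$; $\langle x:=a\rangle\phi\to[x:=a]\phi$; $\phi\to[x:=a]\phi$ ($x\notin FV(\phi)$); $[y:=a]([x:=a]\phi\to\phi[y/x])$ ($\phi[y/x]$ admissible); $[x:=a][y:=b]\phi\to[y:=b][x:=a]\phi$ ($x\neq y$); $\bigwedge_{a\in\mathbf{A}}[x:=a]\phi\to\phi$; $\mathsf{K}_X\alpha\to\alpha$; $[\vec{x}:=\vec{a}](\neg\mathsf{K}_{\vec{x}}\alpha\to\mathsf{K}_{\vec{x}}[\vec{x}:=\vec{a}]\neg\mathsf{K}_{\vec{x}}\alpha)$; $[x:=a]\mathsf{K}_{x}\langle x:=a\rangle\top$; $[x:=a](p_x\to\mathsf{K}_{x}[x:=a]p_x)$; $[\vec{x}:=\vec{a}](\bigwedge_{b\in B}[x:=b]\bot\to\mathsf{K}_{\vec{x}}\bigwedge_{b\in B}[x:=b]\bot)$ with $B=\mathbf{A}\setminus\{\vec a\}$. Rules: modus ponens; from sentence $\alpha$ infer $\mathsf{K}_\emptyset\alpha$; from $\phi$ infer $[x:=a]\phi$. Intensional distributed knowledge: for a formula $\phi$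 with free variables among $\{x\}$ and $A\subseteq\mathbf{A}$, let $\phi!(A):=\bigwedge_{a\in A}\langle x:=a\rangle\phi\wedge\bigwedge_{b\in\mathbf{A}\setminus A}[x:=b]\neg\phi$. For a sentence $\alpha$, $\mathsf{K}_\phi\alpha:=\bigwedge_{\{\vec a\}\subseteq\mathbf{A}}(\phi!(\{\vec a\})\to[\vec{x}:=\vec{a}]\mathsf{K}_{\vec{x}}\alpha)$, where the conjunction ranges over all subsets of $\mathbf{A}$, each listed as a string $\vec a$ of distinct agents and paired with a string $\vec x$ of distinct variables of the same length. *)

(* Defs.v *)
From HB Require Import structures.
From mathcomp Require Import all_boot.
From mathcomp Require Import finmap.

Set Implicit Arguments.
Unset Strict Implicit.
Unset Printing Implicit Defensive.

Local Open Scope fset_scope.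

Inductive form (A : Type) : Type :=
  | Pred of nat & nat
  | Top
  | Neg of form A
  | And of form A & form A
  | Asg of nat & A & form A      (* Asg x a f  =  [x:=a] f *)
  | K of {fset nat} & form A.

Arguments Top {A}.

Section LEL.
Variable A : finType.
Notation form := (form A).

Fixpoint fv (f : form) : {fset nat} :=
  match f with
  | Pred _ x => [fset x]
  | Top => fset0
  | Neg g => fv g
  | And g h => fv g `|` fv h
  | Asg x _ g => fv g `\ x
  | K X _ => X
  end.

Fixpoint wf (f : form) : bool :=
  match f with
  | Pred _ _ | Top => true
  | Neg g => wf g
  | And g h => wf g && wf h
  | Asg _ _ g => wf g
  | K _ g => wf g && (fv g == fset0)
  end.

Definition sentence (f : form) : bool := wf f && (fv f == fset0).

(* subst y x f  =  f[y/x] *)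
Fixpoint subst (y x : nat) (f : form) : form :=
  match f with
  | Pred p z => Pred A p (if z == x then y else z)
  | Top => Top
  | Neg g => Neg (subst y x g)
  | And g h => And (subst y x g) (subst y x h)
  | Asg z a g => if z == x then Asg z a g else Asg z a (subst y x g)
  | K X g => K (if x \in X then y |` (X `\ x) else X) g
  end.

(* f[y/x] admissible: x has no free occurrence within the scope of any [y:=b] *)
Fixpoint admissible (y x : nat) (f : form) : bool :=
  match f with
  | Pred _ _ | Top | K _ _ => true
  | Neg g => admissible y x g
  | And g h => admissible y x g && admissible y x h
  | Asg z _ g => if z == x then true
                 else ((z != y) || (x \notin fv g)) && admissible y x g
  end.

Definition Imp (f g : form) : form := Neg (And f (Neg g)).
Definition Bot : form := Neg Top.
Definition Dia (x : nat) (a : A) (f : form) : form := Neg (Asg x a (Neg f)).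
Definition bigAnd (l : seq form) : form := foldr (@And A) Top l.

Definition asgs (s : seq (nat * A)) (f : form) : form :=
  foldr (fun p g => Asg p.1 p.2 g) f s.
Definition vars (s : seq (nat * A)) : {fset nat} := [fset v | v in map fst s].

(* propositional tautologies: true under every valuation of the
   non-propositional (atomic, assignment and knowledge) subformulas *)
Fixpoint eval (v : form -> bool) (f : form) : bool :=
  match f with
  | Top => true
  | Neg g => ~~ eval v g
  | And g h => eval v g && eval v h
  | _ => v f
  end.
Definition taut (f : form) : Prop := forall v, eval v f.

Inductive axiom : form -> Prop :=
  | ax_taut f : taut f -> axiom f
  | ax_KK X a b : axiom (Imp (K X (Imp a b)) (Imp (K X a) (K X b)))
  | ax_Kmono X Y a : X `<=` Y -> axiom (Imp (K X a) (K Y a))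
  | ax_AK x a f g :
      axiom (Imp (Asg x a (Imp f g)) (Imp (Asg x a f) (Asg x a g)))
  | ax_func x a f : axiom (Imp (Dia x a f) (Asg x a f))
  | ax_vac x a f : x \notin fv f -> axiom (Imp f (Asg x a f))
  | ax_sub x y a f : admissible y x f ->
      axiom (Asg y a (Imp (Asg x a f) (subst y x f)))
  | ax_comm x y a b f : x != y ->
      axiom (Imp (Asg x a (Asg y b f)) (Asg y b (Asg x a f)))
  | ax_cover x f : axiom (Imp (bigAnd [seq Asg x a f | a <- enum A]) f)
  | ax_T X a : axiom (Imp (K X a) a)
  | ax_neg s a :
      axiom (asgs s (Imp (Neg (K (vars s) a))
                         (K (vars s) (asgs s (Neg (K (vars s) a))))))
  | ax_self x a : axiom (Asg x a (K [fset x] (Dia x a Top)))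
  | ax_pred p x a :
      axiom (Asg x a (Imp (Pred A p x) (K [fset x] (Asg x a (Pred A p x)))))
  | ax_abs s x :
      axiom (asgs s
        (Imp (bigAnd [seq Asg x b Bot | b <- enum A & b \notin map snd s])
             (K (vars s) (bigAnd [seq Asg x b Bot | b <- enum A & b \notin map snd s])))).

Inductive thm : form -> Prop :=
  | thm_ax f : axiom f -> wf f -> thm f
  | thm_mp f g : thm (Imp f g) -> thm f -> thm g
  | thm_nec a : thm a -> sentence a -> thm (K fset0 a)
  | thm_asg x b f : thm f -> thm (Asg x b f).

Definition excl (x : nat) (phi : form) (S : {set A}) : form :=
  And (bigAnd [seq Dia x a phi | a <- enum S])
      (bigAnd [seq Asg x b (Neg phi) | b <- enum (~: S)]).

Definition good_listing (ls : {set A} -> seq (nat * A)) : Prop :=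
  forall S, perm_eq (map snd (ls S)) (enum S) /\ uniq (map fst (ls S)).

Definition Kphi (ls : {set A} -> seq (nat * A)) (x : nat) (phi alpha : form)
  : form :=
  bigAnd [seq Imp (excl x phi T) (asgs (ls T) (K (vars (ls T)) alpha))
         | T <- enum {set A}].

End LEL.

(* Main.v *)
Require Import Defs.
From HB Require Import structures.
From mathcomp Require Import all_boot.
From mathcomp Require Import finmap.
Local Open Scope fset_scope.
Set Implicit Arguments. Unset Strict Implicit.

Section P.
Variable A : finType.
Implicit Types (f g h : form A) (s t : seq (nat * A)).

Lemma evalI (v : form A -> bool) f g : eval v (Imp f g) = (eval v f ==> eval v g).
Proof. by rewrite /=; case: (eval v f); case: (eval v g). Qed.

Lemma eval_bigAnd (v : form A -> bool) l : eval v (bigAnd l) = all (eval v) l.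
Proof. by elim: l => //= f l ->. Qed.

Lemma in_vars s v : (v \in vars s) = (v \in map fst s).
Proof. rewrite /vars; apply/imfsetP/idP => [[w Hw ->]|Hv] //; by exists v. Qed.

Lemma in_fv_asgs s f v : (v \in fv (asgs s f)) = (v \in fv f) && (v \notin map fst s).
Proof.
elim: s => [|[x a] s IH] /=; first by rewrite andbT.
rewrite !inE IH negb_or; by case: (v == x); rewrite ?andbF ?andbT.
Qed.

Lemma t1 f g : taut (Imp f (Imp g f)).
Proof. move=> v /=. do ! case: (eval v _) => //. Qed.
Lemma evalN (v : form A -> bool) f : eval v (Neg f) = ~~ eval v f. Proof. by []. Qed.
Lemma evalA (v : form A -> bool) f g : eval v (And f g) = eval v f && eval v g. Proof. by []. Qed.
Lemma evalT (v : form A -> bool) : eval v Top = true. Proof. by []. Qed.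
Ltac tt := move=> ?; try rewrite /Dia; try rewrite /Bot; rewrite ?evalI ?evalN ?evalA ?evalT; do ! case: (eval _ _) => //.

Lemma thm_wf f : thm f -> wf f.
Proof.
elim => {f} //=; first by move=> f g _ /andP[].
Qed.

Lemma taut_thm f : taut f -> wf f -> thm f.
Proof. by move=> Ht Hw; apply: thm_ax => //; apply: ax_taut. Qed.

Lemma taut1 f g : thm f -> taut (Imp f g) -> wf g -> thm g.
Proof.
move=> Hf Ht Hg; apply: (thm_mp _ Hf); apply: taut_thm => //=; by rewrite (thm_wf Hf) Hg.
Qed.

Lemma taut2 f1 f2 g : thm f1 -> thm f2 -> taut (Imp f1 (Imp f2 g)) -> wf g -> thm g.
Proof.
move=> H1 H2 Ht Hg; apply: (thm_mp _ H2); apply: (thm_mp _ H1); apply: taut_thm => //=; by rewrite (thm_wf H1) (thm_wf H2) Hg.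
Qed.

Lemma taut3 f1 f2 f3 g : thm f1 -> thm f2 -> thm f3 ->
  taut (Imp f1 (Imp f2 (Imp f3 g))) -> wf g -> thm g.
Proof.
move=> H1 H2 H3 Ht Hg; apply: (thm_mp _ H3); apply: (thm_mp _ H2); apply: (thm_mp _ H1).
apply: taut_thm => //=; by rewrite (thm_wf H1) (thm_wf H2) (thm_wf H3) Hg.
Qed.

Lemma imp_trans f g h : thm (Imp f g) -> thm (Imp g h) -> thm (Imp f h).
Proof.
move=> H1 H2; apply: (taut2 H1 H2); first by tt.
move: (thm_wf H1) (thm_wf H2) => /= /andP[-> _] /andP[_ ->] //.
Qed.

Lemma wf_asgs s f : wf (asgs s f) = wf f.
Proof. by elim: s. Qed.

Lemma asgs_nec s f : thm f -> thm (asgs s f).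
Proof. by elim: s => //= p s IH H; apply: thm_asg; apply: IH. Qed.

Lemma asgs_K s f g : wf f -> wf g ->
  thm (Imp (asgs s (Imp f g)) (Imp (asgs s f) (asgs s g))).
Proof.
move=> Hf Hg; elim: s => [|[x a] s IH] /=.
  by apply: taut_thm; [tt | rewrite /= Hf Hg].
have h1 := thm_asg x a IH.
have h2 : thm (Imp (Asg x a (Imp (asgs s (Imp f g)) (Imp (asgs s f) (asgs s g))))
   (Imp (Asg x a (asgs s (Imp f g))) (Asg x a (Imp (asgs s f) (asgs s g))))).
  by apply: thm_ax; [apply: ax_AK | rewrite /= ?wf_asgs /= Hf Hg].
have h3 : thm (Imp (Asg x a (Imp (asgs s f) (asgs s g)))
   (Imp (Asg x a (asgs s f)) (Asg x a (asgs s g)))).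
  by apply: thm_ax; [apply: ax_AK | rewrite /= ?wf_asgs /= Hf Hg].
apply: (taut3 h1 h2 h3); first by tt.
by rewrite /= !wf_asgs /= Hf Hg.
Qed.

Lemma asgs_imp1 s f g : thm (asgs s (Imp f g)) -> thm (Imp (asgs s f) (asgs s g)).
Proof.
move=> H; have := thm_wf H; rewrite wf_asgs /= => /andP[Hf Hg].
exact: thm_mp (asgs_K s Hf Hg) H.
Qed.

Lemma asgs_taut1 s f g : thm (asgs s f) -> taut (Imp f g) -> wf g -> thm (asgs s g).
Proof.
move=> H Ht Hg; have Hf := thm_wf H; rewrite wf_asgs in Hf.
apply: thm_mp H; apply: asgs_imp1; apply: asgs_nec; apply: taut_thm => //=; by rewrite Hf Hg.
Qed.

Lemma asgs_taut2 s f1 f2 g : thm (asgs s f1) -> thm (asgs s f2) ->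
  taut (Imp f1 (Imp f2 g)) -> wf g -> thm (asgs s g).
Proof.
move=> H1 H2 Ht Hg; have W1 := thm_wf H1; have W2 := thm_wf H2.
move: W1 W2; rewrite !wf_asgs => W1 W2.
have h : thm (asgs s (Imp f1 (Imp f2 g))).
  by apply: asgs_nec; apply: taut_thm => //=; rewrite W1 W2 Hg.
have h1 := asgs_imp1 h.
have h2 := thm_mp h1 H1.
exact: thm_mp (asgs_imp1 h2) H2.
Qed.

Lemma asgs_taut3 s f1 f2 f3 g : thm (asgs s f1) -> thm (asgs s f2) -> thm (asgs s f3) ->
  taut (Imp f1 (Imp f2 (Imp f3 g))) -> wf g -> thm (asgs s g).
Proof.
move=> H1 H2 H3 Ht Hg; have W1 := thm_wf H1; have W2 := thm_wf H2; have W3 := thm_wf H3.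
move: W1 W2 W3; rewrite !wf_asgs => W1 W2 W3.
have h : thm (asgs s (Imp f1 (Imp f2 (Imp f3 g)))).
  by apply: asgs_nec; apply: taut_thm => //=; rewrite W1 W2 W3 Hg.
have h2 := thm_mp (asgs_imp1 h) H1.
have h3 := thm_mp (asgs_imp1 h2) H2.
exact: thm_mp (asgs_imp1 h3) H3.
Qed.

Lemma asgs_imp2 s f1 f2 g : thm (asgs s (Imp f1 (Imp f2 g))) ->
  thm (Imp (asgs s f1) (Imp (asgs s f2) (asgs s g))).
Proof.
move=> H; have := thm_wf H; rewrite wf_asgs /= => /andP[W1 /andP[W2 Wg]].
have h1 := asgs_imp1 H.
have h2 := asgs_K s W2 Wg.
apply: (taut2 h1 h2); first by tt.
by rewrite /= !wf_asgs W1 W2 Wg.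
Qed.

Lemma asgs_mono s f g : thm (Imp f g) -> thm (Imp (asgs s f) (asgs s g)).
Proof. by move=> H; apply: asgs_imp1; apply: asgs_nec. Qed.

Lemma wfI f g : wf (Imp f g) = wf f && wf g. Proof. by []. Qed.
Lemma wfK X f : wf (K X f) = sentence f. Proof. by []. Qed.
Lemma wfN f : wf (Neg f) = wf f. Proof. by []. Qed.

Lemma fv0P f : reflect (forall v, v \notin fv f) (fv f == fset0).
Proof.
apply: (iffP eqP) => [-> v|H]; first by rewrite inE.
by apply/fsetP => v; rewrite inE; apply/negbTE/H.
Qed.

Lemma sentP f : wf f -> (forall v, v \notin fv f) -> sentence f.
Proof. by move=> Hw H; rewrite /sentence Hw; apply/fv0P. Qed.
Lemma sent_wf f : sentence f -> wf f.
Proof. by case/andP. Qed.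
Lemma sent_fv f v : sentence f -> v \notin fv f.
Proof. by case/andP => _ /fv0P. Qed.

Lemma sentI f g : sentence f -> sentence g -> sentence (Imp f g).
Proof.
move=> Sf Sg; apply: sentP; first by rewrite wfI (sent_wf Sf) (sent_wf Sg).
by move=> v; rewrite /= inE negb_or !sent_fv.
Qed.
Lemma sentN f : sentence f -> sentence (Neg f).
Proof. by []. Qed.
Lemma sentA f g : sentence f -> sentence g -> sentence (And f g).
Proof.
move=> Sf Sg; apply: sentP; first by rewrite /= (sent_wf Sf) (sent_wf Sg).
by move=> v; rewrite /= inE negb_or !sent_fv.
Qed.
Lemma sentT : sentence (@Top A). Proof. by []. Qed.
Lemma sent_bigAnd (l : seq (form A)) : all (@sentence A) l -> sentence (bigAnd l).
Proof. by elim: l => [|f l IH] //= /andP[Sf Sl]; apply: sentA => //; apply: IH. Qed.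

Lemma sent_asgs s f : wf f -> (forall v, v \in fv f -> v \in map fst s) -> sentence (asgs s f).
Proof.
move=> Hw H; apply: sentP; first by rewrite wf_asgs.
move=> v; rewrite in_fv_asgs negb_and; case E: (v \in fv f) => //=.
by rewrite (H _ E).
Qed.

Lemma sentD s al : sentence al -> sentence (asgs s (K (vars s) al)).
Proof. by move=> Sa; apply: sent_asgs => // v /=; rewrite in_vars. Qed.

Lemma K_mono1 X f g : thm (Imp f g) -> sentence f -> sentence g -> thm (Imp (K X f) (K X g)).
Proof.
move=> H Sf Sg.
have Si : sentence (Imp f g) := sentI Sf Sg.
have h1 := thm_nec H Si.
have h2 : thm (Imp (K fset0 (Imp f g)) (K X (Imp f g))).
  by apply: thm_ax; [apply: ax_Kmono; exact: fsub0set | rewrite wfI !wfK Si].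
have h3 : thm (Imp (K X (Imp f g)) (Imp (K X f) (K X g))).
  by apply: thm_ax; [apply: ax_KK | rewrite !wfI !wfK Si Sf Sg].
exact: thm_mp h3 (thm_mp h2 h1).
Qed.

Lemma K_mono2 X f1 f2 g : thm (Imp f1 (Imp f2 g)) -> sentence f1 -> sentence f2 -> sentence g ->
  thm (Imp (K X f1) (Imp (K X f2) (K X g))).
Proof.
move=> H S1 S2 Sg.
have h1 := K_mono1 X H S1 (sentI S2 Sg).
have h2 : thm (Imp (K X (Imp f2 g)) (Imp (K X f2) (K X g))).
  by apply: thm_ax; [apply: ax_KK | rewrite !wfI !wfK (sentI S2 Sg) S2 Sg].
apply: (taut2 h1 h2); first by tt.
by rewrite !wfI !wfK S1 S2 Sg.
Qed.

Lemma K_top X : thm (K X (@Top A)).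
Proof.
have h1 : thm (K fset0 (@Top A)) by apply: thm_nec => //; apply: taut_thm.
have h2 : thm (Imp (K fset0 (@Top A)) (K X Top)).
  by apply: thm_ax; [apply: ax_Kmono; exact: fsub0set | by []].
exact: thm_mp h2 h1.
Qed.

Lemma persist s f : wf f -> (forall p, p \in s -> p.1 \notin fv f) -> thm (Imp f (asgs s f)).
Proof.
elim: s => [|[x a] s IH] Hw Hd /=.
  by apply: taut_thm; [tt | rewrite wfI Hw].
have h1 : thm (Imp f (asgs s f)).
  by apply: IH => // p Hp; apply: Hd; rewrite inE Hp orbT.
have Hx : x \notin fv f by apply: (Hd (x, a)); rewrite inE eqxx.
have h2 : thm (Imp (asgs s f) (Asg x a (asgs s f))).
  apply: thm_ax; last by rewrite wfI /= wf_asgs Hw.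
  by apply: ax_vac; rewrite in_fv_asgs negb_and Hx.
exact: imp_trans h1 h2.
Qed.

Lemma persist_sent s f : sentence f -> thm (Imp f (asgs s f)).
Proof. by move=> Sf; apply: persist; [exact: sent_wf | move=> p _; exact: sent_fv]. Qed.

Lemma into s N f : sentence N -> wf f -> thm (Imp N (asgs s f)) -> thm (asgs s (Imp N f)).
Proof.
move=> SN Hf H.
have WN := sent_wf SN.
have h1 := persist_sent s (sentN SN).
have h2 : thm (Imp (asgs s (Neg N)) (asgs s (Imp N f))).
  by apply: asgs_mono; apply: taut_thm; [tt | rewrite /= WN Hf].
have h3 : thm (Imp (asgs s f) (asgs s (Imp N f))).
  by apply: asgs_mono; apply: taut_thm; [tt | rewrite /= WN Hf].
have h12 := imp_trans h1 h2.
have h3' := imp_trans H h3.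
apply: (taut2 h12 h3'); first by tt.
by rewrite wf_asgs wfI WN Hf.
Qed.

Lemma out s N f : sentence N -> thm (asgs s (Imp N f)) -> thm (Imp N (asgs s f)).
Proof. by move=> SN H; apply: imp_trans (persist_sent s SN) (asgs_imp1 H). Qed.

Lemma asgs_cat s1 s2 f : asgs (s1 ++ s2) f = asgs s1 (asgs s2 f).
Proof. exact: foldr_cat. Qed.

Lemma wf_subst y z f : wf (subst y z f) = wf f.
Proof.
elim: f => [p w| |g IH|g IHg h IHh|w b g IH|X g IH] //=; rewrite ?IH ?IHg ?IHh //.
by case: (w == z) => //=.
Qed.

Lemma subst_asgs y z s g : z \notin map fst s -> subst y z (asgs s g) = asgs s (subst y z g).
Proof.
elim: s => [|[w b] s IH] //=; rewrite inE negb_or => /andP[Hzw Hs].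
by rewrite eq_sym (negbTE Hzw) IH.
Qed.

Lemma adm_asgs y z s g : (forall p, p \in s -> p.1 != y) -> z \notin map fst s ->
  admissible y z g -> admissible y z (asgs s g).
Proof.
elim: s => [|[w b] s IH] //= Hs; rewrite inE negb_or => /andP[Hzw Hz] Ha.
rewrite eq_sym (negbTE Hzw) (Hs (w, b)) ?inE ?eqxx //=.
by apply: IH => // p Hp; apply: Hs; rewrite inE Hp orbT.
Qed.

Lemma move_in y a t2 g : y \notin map fst t2 -> wf g ->
  thm (Imp (asgs t2 (Asg y a g)) (Asg y a (asgs t2 g))).
Proof.
elim: t2 => [|[w b] t2 IH] /= Hy Hg.
  by apply: taut_thm; [tt | rewrite wfI /= Hg].
move: Hy; rewrite inE negb_or => /andP[Hwy Hy].
have h1 : thm (Imp (Asg w b (asgs t2 (Asg y a g))) (Asg w b (Asg y a (asgs t2 g)))).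
  exact: (asgs_mono [:: (w, b)] (IH Hy Hg)).
have h2 : thm (Imp (Asg w b (Asg y a (asgs t2 g))) (Asg y a (Asg w b (asgs t2 g)))).
  apply: thm_ax; first by apply: ax_comm; rewrite eq_sym.
  by rewrite wfI /= wf_asgs Hg.
exact: imp_trans h1 h2.
Qed.

Lemma sub_under t y z a f : uniq (map fst t) -> (y, a) \in t -> admissible y z f -> wf f ->
  thm (asgs t (Imp (Asg z a f) (subst y z f))).
Proof.
move=> Ut Hin Ad Wf.
case/splitPr: Hin Ut => t1 t2.
rewrite map_cat cat_uniq /= => /and3P[_ _ /andP[Hy _]].
have WF : wf (Imp (Asg z a f) (subst y z f)) by rewrite wfI /= wf_subst Wf.
have h0 : thm (Asg y a (Imp (Asg z a f) (subst y z f))).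
  by apply: thm_ax; [apply: ax_sub | exact: WF].
have h1 := asgs_nec t1 (asgs_nec t2 h0).
have h2 := asgs_mono t1 (move_in a Hy WF).
rewrite asgs_cat /=. exact: thm_mp h2 h1.
Qed.

Lemma main_gen t al (Sa : sentence al) : uniq (map fst t) ->
  forall u, uniq (map fst u) -> (forall p, p \in u -> p.1 \notin map fst t) ->
  (forall p, p \in u -> exists y, (y, p.2) \in t) ->
  forall G, G `<=` vars t ->
  thm (asgs t (Imp (asgs u (K (vars u `|` G) al)) (K (vars t) al))).
Proof.
move=> Ut; elim => [|[z a] u IH] /= Uu Hd Hag G HG.
  apply: asgs_nec; apply: thm_ax; last by rewrite wfI !wfK Sa.
  apply: ax_Kmono; apply/fsubsetP => v; rewrite inE in_vars /= => HvG.
  exact: (fsubsetP HG).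
move: Uu => /andP[Hzu Uu].
have [y Hy] := Hag (z, a) (mem_head _ _).
have Hyt : y \in map fst t by apply/mapP; exists (y, a).
have Hzt : z \notin map fst t by apply: (Hd (z, a)); exact: mem_head.
have HzG : z \notin G by apply/negP => /(fsubsetP HG); rewrite in_vars (negbTE Hzt).
set f := asgs u (K (vars ((z, a) :: u) `|` G) al).
have Hsub : subst y z f = asgs u (K (vars u `|` (y |` G)) al).
  rewrite /f subst_asgs //= in_fsetU in_vars /= inE eqxx /=; congr (asgs u (K _ al)).
  apply/fsetP => v; rewrite !(in_fsetU, in_fsetD1, in_vars, in_fset1U) /= in_cons.
  case: (eqVneq v z) => [->|Hvz] /=.
    by rewrite (negbTE Hzu) (negbTE HzG) /= !orbF.
  by rewrite orbCA.
have Wf : wf f by rewrite /f wf_asgs wfK.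
have h1 := @sub_under t y z a f Ut Hy.
rewrite Hsub in h1.
have h2 : thm (asgs t (Imp (asgs u (K (vars u `|` (y |` G)) al)) (K (vars t) al))).
  apply: IH => //.
  - by move=> p Hp; apply: Hd; rewrite inE Hp orbT.
  - by move=> p Hp; apply: Hag; rewrite inE Hp orbT.
  - apply/fsubsetP => v; rewrite !inE => /orP[/eqP->|/(fsubsetP HG)] //.
    by rewrite in_vars.
have Ad : admissible y z f.
  apply: adm_asgs => //.
  move=> p Hp; apply/eqP => Ep; move: (Hd p); rewrite inE Hp orbT Ep Hyt.
  by move=> /(_ isT).
have h1' := h1 Ad Wf.
apply: (asgs_taut2 h1' h2); first by tt.
by rewrite wfI wfK /= Wf.
Qed.

Lemma main t u al : sentence al -> uniq (map fst t) -> uniq (map fst u) ->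
  (forall p, p \in u -> p.1 \notin map fst t) ->
  (forall p, p \in u -> exists y, (y, p.2) \in t) ->
  thm (Imp (asgs u (K (vars u) al)) (asgs t (K (vars t) al))).
Proof.
move=> Sa Ut Uu Hd Hag.
have := main_gen Sa Ut Uu Hd Hag (fsub0set _); rewrite fsetU0 => H.
exact: imp_trans (persist_sent t (sentD u Sa)) (asgs_imp1 H).
Qed.

Lemma wfD x a f : wf (Dia x a f) = wf f. Proof. by []. Qed.
Lemma wfAs x a f : wf (Asg x a f) = wf f. Proof. by []. Qed.
Lemma wfA f g : wf (And f g) = wf f && wf g. Proof. by []. Qed.
Lemma wfTop : wf (@Top A). Proof. by []. Qed.
Ltac wfs := rewrite ?(wf_asgs, wfI, wfN, wfK, wf_subst, wfD, wfAs, wfA, wfTop);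
  repeat (match goal with |- is_true (_ && _) => apply/andP; split end); try assumption; try (apply: sent_wf; assumption); try done.

Lemma asg_taut1 x a f g : thm (Asg x a f) -> taut (Imp f g) -> wf g -> thm (Asg x a g).
Proof. exact: (@asgs_taut1 [:: (x, a)]). Qed.
Lemma asg_taut2 x a f1 f2 g : thm (Asg x a f1) -> thm (Asg x a f2) ->
  taut (Imp f1 (Imp f2 g)) -> wf g -> thm (Asg x a g).
Proof. exact: (@asgs_taut2 [:: (x, a)]). Qed.
Lemma asg_taut3 x a f1 f2 f3 g : thm (Asg x a f1) -> thm (Asg x a f2) -> thm (Asg x a f3) ->
  taut (Imp f1 (Imp f2 (Imp f3 g))) -> wf g -> thm (Asg x a g).
Proof. exact: (@asgs_taut3 [:: (x, a)]). Qed.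
Lemma asg_imp1 x a f g : thm (Asg x a (Imp f g)) -> thm (Imp (Asg x a f) (Asg x a g)).
Proof. exact: (@asgs_imp1 [:: (x, a)]). Qed.
Lemma asg_imp2 x a f1 f2 g : thm (Asg x a (Imp f1 (Imp f2 g))) ->
  thm (Imp (Asg x a f1) (Imp (Asg x a f2) (Asg x a g))).
Proof. exact: (@asgs_imp2 [:: (x, a)]). Qed.

Lemma sentAsg x a f : wf f -> fv f `<=` [fset x] -> sentence (Asg x a f).
Proof.
move=> Hw Hs; apply: sentP => // v /=; rewrite in_fsetD1 negb_and negbK.
case E: (v \in fv f); last by rewrite orbT.
by move/fsubsetP: Hs => /(_ _ E); rewrite in_fset1 => ->.
Qed.

Lemma PI s al : sentence al ->
  thm (asgs s (Imp (K (vars s) al) (K (vars s) (asgs s (K (vars s) al))))).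
Proof.
move=> Sa.
have SP : sentence (asgs s (K (vars s) al)) := sentD s Sa.
have SN : sentence (asgs s (Neg (K (vars s) al))).
  by apply: sent_asgs => // v /=; rewrite in_vars.
have SM : sentence (asgs s (Neg (K (vars s) (asgs s (Neg (K (vars s) al)))))).
  by apply: sent_asgs => // v /=; rewrite in_vars.
have A1 : thm (asgs s (Imp (Neg (K (vars s) al))
            (K (vars s) (asgs s (Neg (K (vars s) al)))))).
  by apply: thm_ax; [apply: ax_neg | wfs].
have A2 : thm (asgs s (Imp (Neg (K (vars s) (asgs s (Neg (K (vars s) al)))))
            (K (vars s) (asgs s (Neg (K (vars s) (asgs s (Neg (K (vars s) al))))))))).
  by apply: thm_ax; [apply: ax_neg | wfs].
have T1 : thm (Imp (K (vars s) (asgs s (Neg (K (vars s) al)))) (asgs s (Neg (K (vars s) al)))).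
  by apply: thm_ax; [apply: ax_T | wfs].
have I1 : thm (asgs s (Imp (asgs s (Neg (K (vars s) al))) (Neg (K (vars s) al)))).
  apply: into => //; try by wfs.
  by apply: taut_thm; [tt | wfs].
have C1 : thm (asgs s (Imp (Neg (K (vars s) (asgs s (Neg (K (vars s) al))))) (K (vars s) al))).
  by apply: (asgs_taut1 A1); [tt | wfs].
have MP := asgs_imp1 C1.
have KMP := K_mono1 (vars s) MP SM SP.
have X1 : thm (asgs s (Imp (K (vars s) al) (Neg (K (vars s) (asgs s (Neg (K (vars s) al))))))).
  by apply: (asgs_taut2 I1 (asgs_nec s T1)); [tt | wfs].
apply: (asgs_taut3 X1 A2 (asgs_nec s KMP)); first by tt.
by wfs.
Qed.

Lemma pos_phi x (phi : form A) a : wf phi -> fv phi `<=` [fset x] ->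
  thm (Asg x a (Imp phi (K [fset x] (Asg x a phi)))) ->
  thm (Imp (Dia x a phi) (Asg x a (K [fset x] (Dia x a phi)))).
Proof.
move=> Hw Hs H.
have S1 : sentence (Asg x a phi) := sentAsg a Hw Hs.
have S2 : sentence (Dia x a phi) by apply: sentN; apply: sentAsg.
have S3 : sentence (Dia x a (@Top A)) by apply: sentN; apply: sentAsg => //; exact: fsub0set.
have k : thm (Imp (Asg x a phi) (Imp (Asg x a (Neg phi)) (Asg x a (Neg Top)))).
  by apply: asg_imp2; apply: thm_asg; apply: taut_thm; [tt | wfs].
have h0 : thm (Imp (Asg x a phi) (Imp (Dia x a Top) (Dia x a phi))).
  by apply: (taut1 k); [tt | wfs].
have h1 := K_mono2 [fset x] h0 S1 S3 S2.
have hs : thm (Asg x a (K [fset x] (Dia x a Top))).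
  by apply: thm_ax; [apply: ax_self | wfs].
have R : thm (Asg x a (Imp phi (K [fset x] (Dia x a phi)))).
  by apply: (asg_taut3 H hs (thm_asg x a h1)); [tt | wfs].
have R2 : thm (Asg x a (Imp (Neg (K [fset x] (Dia x a phi))) (Neg phi))).
  by apply: (asg_taut1 R); [tt | wfs].
have R3 := asg_imp1 R2.
have R4 : thm (Imp (Dia x a phi) (Dia x a (K [fset x] (Dia x a phi)))).
  by apply: (taut1 R3); [tt | wfs].
have F : thm (Imp (Dia x a (K [fset x] (Dia x a phi))) (Asg x a (K [fset x] (Dia x a phi)))).
  by apply: thm_ax; [apply: ax_func | wfs].
exact: imp_trans R4 F.
Qed.

Lemma ren x y a (chi : form A) : sentence chi ->
  thm (Imp (Asg x a (K [fset x] chi)) (Asg y a (K [fset y] chi))).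
Proof.
move=> Sc.
have S : sentence (Asg x a (K [fset x] chi)) by apply: sentAsg.
have h1 := persist_sent [:: (y, a)] S.
have h2 : thm (Asg y a (Imp (Asg x a (K [fset x] chi)) (subst y x (K [fset x] chi)))).
  by apply: thm_ax; [apply: ax_sub | wfs].
have E : subst y x (K [fset x] chi) = K [fset y] chi.
  by rewrite /= in_fset1 eqxx fsetDv fsetU0.
rewrite E in h2.
exact: imp_trans h1 (asg_imp1 h2).
Qed.

Lemma lift_K s y a (chi : form A) : uniq (map fst s) -> (y, a) \in s -> sentence chi ->
  thm (Imp (Asg y a (K [fset y] chi)) (asgs s (K (vars s) chi))).
Proof.
move=> Us Hin Sc.
have Hyv : [fset y] `<=` vars s.
  by apply/fsubsetP => v; rewrite in_fset1 => /eqP->; rewrite in_vars; apply/mapP; exists (y, a).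
case/splitPr: Hin Us Hyv => s1 s2.
rewrite map_cat cat_uniq /= => /and3P[_ _ /andP[Hy _]] Hyv.
have SN : sentence (Asg y a (K [fset y] chi)) by apply: sentAsg.
have k1 : thm (Imp (K [fset y] chi) (asgs s2 (K [fset y] chi))).
  apply: persist; first by rewrite wfK.
  move=> p Hp /=; rewrite in_fset1; apply/eqP => Ep; move/negP: Hy; apply.
  by rewrite -Ep; apply: map_f.
have k2 : thm (Imp (asgs s2 (K [fset y] chi)) (asgs s2 (K (vars (s1 ++ (y, a) :: s2)) chi))).
  by apply: asgs_mono; apply: thm_ax; [apply: ax_Kmono | wfs].
have k3 : thm (Imp (Asg y a (K [fset y] chi)) (Asg y a (K [fset y] chi))).
  by apply: taut_thm; [tt | wfs].
have k4 := @into [:: (y, a)] _ _ SN (Sc : wf (K [fset y] chi)) k3.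
have k5 : thm (Asg y a (Imp (Asg y a (K [fset y] chi)) (asgs s2 (K (vars (s1 ++ (y, a) :: s2)) chi)))).
  by apply: (asg_taut2 k4 (thm_asg y a (imp_trans k1 k2))); [tt | wfs].
have k6 := @out [:: (y, a)] _ _ SN k5.
have k7 := asgs_mono s1 k6.
rewrite asgs_cat /=.
exact: imp_trans (persist_sent s1 SN) k7.
Qed.

End P.
Section Main.
Variable A : finType.
Variable ls : {set A} -> seq (nat * A).
Hypothesis Hls : good_listing ls.
Variables (x : nat) (phi : form A).
Hypothesis Hwf : wf phi.
Hypothesis Hfv : fv phi `<=` [fset x].
Hypothesis H : forall a : A, thm (Asg x a (Imp phi (K [fset x] (Asg x a phi)))).

Ltac tt := move=> ?; try rewrite /Dia; try rewrite /Bot; rewrite ?evalI ?evalN ?evalA ?evalT; do ! case: (eval _ _) => //.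
Ltac wfs := rewrite ?(wf_asgs, wfI, wfN, wfK, wf_subst, wfD, wfAs, wfA, wfTop);
  repeat (match goal with |- is_true (_ && _) => apply/andP; split end); try assumption; try (apply: sent_wf; assumption); try done.

Local Notation D t b := (asgs t (K (vars t) b)).

Lemma sent_dia a : sentence (Dia x a phi).
Proof. by apply: sentN; apply: sentAsg. Qed.

Lemma sent_excl T : sentence (excl x phi T).
Proof.
apply: sentA; apply: sent_bigAnd; rewrite all_map; apply/allP => b _ /=.
  exact: sent_dia.
by apply: sentAsg.
Qed.

Lemma sent_Kp b : sentence b -> sentence (Kphi ls x phi b).
Proof.
move=> Sb; apply: sent_bigAnd; rewrite all_map; apply/allP => T _ /=.
by apply: sentI; [exact: sent_excl | exact: sentD].
Qed.

Lemma proj_Kp b S : sentence b -> thm (Imp (Kphi ls x phi b) (Imp (excl x phi S) (D (ls S) b))).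
Proof.
move=> Sb; apply: taut_thm; last first.
  by rewrite wfI (sent_wf (sent_Kp Sb)) wfI (sent_wf (sent_excl S)) (sent_wf (sentD (ls S) Sb)).
move=> v; rewrite evalI eval_bigAnd all_map; apply/implyP => /allP /(_ S).
by rewrite mem_enum => /(_ isT).
Qed.

Lemma excl_dia (S : {set A}) a : a \in S -> taut (Imp (excl x phi S) (Dia x a phi)).
Proof.
move=> Ha v; rewrite evalI evalA eval_bigAnd all_map; apply/implyP => /andP[/allP /(_ a) + _].
by rewrite mem_enum => /(_ Ha).
Qed.

Lemma excl_neg (T : {set A}) a (G : form A) : a \notin T -> taut (Imp (Dia x a phi) (Imp (excl x phi T) G)).
Proof.
move=> Ha v; rewrite !evalI evalA !eval_bigAnd (all_map _ _ (enum (~: T))).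
apply/implyP => Hd; apply/implyP => /andP[_ /allP /(_ a)].
rewrite mem_enum inE Ha => /(_ isT) /= Hn.
by move: Hd; rewrite /Dia evalN /= Hn.
Qed.

Lemma le_sumn (l : seq nat) v : v \in l -> v <= sumn l.
Proof.
elim: l => [|w l IH] //=; rewrite inE => /orP[/eqP->|/IH Hv]; first exact: leq_addr.
exact: leq_trans Hv (leq_addl _ _).
Qed.

Lemma in_agents (S : {set A}) p : p \in ls S -> p.2 \in S.
Proof.
move=> Hp; have [Hperm _] := Hls S.
by rewrite -mem_enum -(perm_mem Hperm); apply: map_f.
Qed.

Lemma agent_in (S : {set A}) a : a \in S -> exists y, (y, a) \in ls S.
Proof.
move=> Ha; have [Hperm _] := Hls S.
have : a \in map snd (ls S) by rewrite (perm_mem Hperm) mem_enum.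
by case/mapP => [[y b] Hp /= ->]; exists y.
Qed.

Lemma mono_listing (S T : {set A}) b : sentence b -> S \subset T ->
  thm (Imp (D (ls S) b) (D (ls T) b)).
Proof.
move=> Sb HST.
set s := ls S; set t := ls T.
set M := (sumn (map fst (s ++ t))).+1.
set s' := map (fun p => ((p.1 + M)%N, p.2)) s.
have Es : map fst s' = map (addn^~ M) (map fst s) by rewrite /s' -!map_comp.
have Us : uniq (map fst s) by case: (Hls S).
have Ut : uniq (map fst t) by case: (Hls T).
have Us' : uniq (map fst s') by rewrite Es map_inj_uniq //; exact: addIn.
have Big : forall v w, v \in map fst (s ++ t) -> w \in map fst s' -> v < w.
  move=> v w Hv; rewrite Es => /mapP [w' _ ->].
  by rewrite addnS ltnS (leq_trans (le_sumn Hv)) // leq_addl.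
have h1 : thm (Imp (D s b) (D s' b)).
  apply: main => //.
  - move=> p Hp; apply/negP => Hin.
    have Hv : p.1 \in map fst (s ++ t).
      by rewrite map_cat mem_cat; apply/orP; left; apply: map_f.
    by move: (Big _ _ Hv Hin); rewrite ltnn.
  - move=> p Hp; exists ((p.1 + M)%N); apply/mapP; exists p => //; by case: p Hp.
have h2 : thm (Imp (D s' b) (D t b)).
  apply: main => //.
  - move=> p Hp; apply/negP => Hin.
    have Hv : p.1 \in map fst (s ++ t) by rewrite map_cat mem_cat Hin orbT.
    by move: (Big _ _ Hv (map_f _ Hp)); rewrite ltnn.
  - move=> p /mapP [q Hq ->] /=.
    apply: agent_in; apply: (subsetP HST); exact: in_agents Hq.
exact: imp_trans h1 h2.
Qed.

Lemma K_bigAnd (I : Type) s V E (F : I -> form A) (r : seq I) : wf E ->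
  (forall i, sentence (F i)) ->
  (forall i, thm (Imp E (asgs s (K V (F i))))) ->
  thm (Imp E (asgs s (K V (bigAnd (map F r))))).
Proof.
move=> WE SF HF; elim: r => [|i r IH] /=.
  have h := asgs_nec s (@K_top A V).
  by apply: (taut1 h); [tt | wfs].
have Sr : sentence (bigAnd (map F r)).
  apply: sent_bigAnd; by elim: (r) {IH} => //= j r' ->; rewrite SF.
have k : thm (Imp (F i) (Imp (bigAnd (map F r)) (And (F i) (bigAnd (map F r))))).
  by apply: taut_thm; [tt | rewrite !wfI wfA (sent_wf (SF i)) (sent_wf Sr)].
have k2 := asgs_imp2 (asgs_nec s (K_mono2 V k (SF i) Sr (sentA (SF i) Sr))).
apply: (taut3 (HF i) IH k2); first by tt.
by wfs; apply: sentA.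
Qed.

Lemma bigAnd_intro (I : Type) E (F : I -> form A) (r : seq I) : wf E ->
  (forall i, thm (Imp E (F i))) -> thm (Imp E (bigAnd (map F r))).
Proof.
move=> WE HF; elim: r => [|i r IH] /=.
  by apply: taut_thm; [tt | wfs].
apply: (taut2 (HF i) IH); first by tt.
move: (thm_wf (HF i)) (thm_wf IH); rewrite !wfI => /andP[_ W1] /andP[_ W2].
by rewrite ?wfI wfA W1 W2 WE.
Qed.

Lemma step (S : {set A}) al : sentence al ->
  thm (Imp (And (excl x phi S) (D (ls S) al)) (D (ls S) (Kphi ls x phi al))).
Proof.
move=> Sa.
set s := ls S.
have Us : uniq (map fst s) by case: (Hls S).
have SE : sentence (And (excl x phi S) (D s al)) by apply: sentA; [exact: sent_excl | exact: sentD].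
have e1 : thm (Imp (And (excl x phi S) (D s al)) (D s al)).
  by apply: taut_thm; [tt | rewrite wfI (sent_wf SE) (sent_wf (sentD s Sa))].
apply: K_bigAnd => //; first exact: sent_wf.
  by move=> T /=; apply: sentI; [exact: sent_excl | exact: sentD].
move=> T /=.
have ST : sentence (Imp (excl x phi T) (D (ls T) al)) by apply: sentI; [exact: sent_excl | exact: sentD].
case: (boolP (S \subset T)) => HST.
  have e2 := imp_trans e1 (asgs_imp1 (PI s Sa)).
  have m := mono_listing Sa HST.
  have m2 : thm (Imp (D s al) (Imp (excl x phi T) (D (ls T) al))).
    by apply: (taut1 m); [tt | by rewrite wfI (sent_wf (sentD s Sa)) (sent_wf ST)].
  have m3 := K_mono1 (vars s) m2 (sentD s Sa) ST.
  exact: imp_trans e2 (asgs_mono s m3).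
case/subsetPn: HST => a HaS HaT.
have [y Hy] := agent_in HaS.
have e2 : thm (Imp (And (excl x phi S) (D s al)) (Dia x a phi)).
  apply: taut_thm; last by rewrite wfI (sent_wf SE) (sent_wf (sent_dia a)).
  move=> v; move: (excl_dia HaS v); rewrite !evalI (evalA _ (excl x phi S)).
  by do ! case: (eval _ _).
have q1 := @pos_phi A x phi a Hwf Hfv (H a).
have q2 := @ren A x y a _ (sent_dia a).
have q3 := lift_K Us Hy (sent_dia a).
have m : thm (Imp (Dia x a phi) (Imp (excl x phi T) (D (ls T) al))).
  by apply: taut_thm; [exact: excl_neg | exact: sent_wf (sentI (sent_dia a) ST)].
have m3 := K_mono1 (vars s) m (sent_dia a) ST.
exact: imp_trans e2 (imp_trans q1 (imp_trans q2 (imp_trans q3 (asgs_mono s m3)))).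
Qed.

Lemma final al : sentence al ->
  thm (Imp (Kphi ls x phi al) (Kphi ls x phi (Kphi ls x phi al))).
Proof.
move=> Sa.
have SK := sent_Kp Sa.
apply: bigAnd_intro; first exact: sent_wf.
move=> S.
have h1 := proj_Kp S Sa.
have h2 := step S Sa.
apply: (taut2 h1 h2); first by tt.
by rewrite !wfI (sent_wf SK) (sent_wf (sent_excl S)) (sent_wf (sentD (ls S) SK)).
Qed.

End Main.

Unset Implicit Arguments.

Theorem lemma1 (A : finType) (HA : 0 < #|A|)
  (ls : {set A} -> seq (nat * A)) (Hls : good_listing ls)
  (x : nat) (phi : form A) (Hwf : wf phi) (Hfv : fv phi `<=` [fset x])
  (H : forall a : A, thm (Asg x a (Imp phi (K [fset x] (Asg x a phi))))) :
  forall alpha : form A, sentence alpha ->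
    thm (Imp (Kphi ls x phi alpha) (Kphi ls x phi (Kphi ls x phi alpha))).
Proof.
move=> alpha Sa.
exact: (final Hls Hwf Hfv H Sa).
Qed.
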